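(* Let $X$ be a completely regular (Tychonoff) space and $C(X)$ the ring of real-valued continuous functions on $X$. The following are equivalent: (1) for any two ideals $A,B$ of $C(X)$ with $A\cap B=(0)$, $\mathrm{Ann}(A)+\mathrm{Ann}(B)=C(X)$; (2) $X$ is extremally disconnected.
   Context: $\mathrm{Ann}(A)=\{f\in C(X): fA=0\}$. A space $X$ is extremally disconnected if the closure of every open set is open. *)

(* Defs.v *)
From Stdlib Require Import Reals.
From Stdlib Require Export Rtopology.
Open Scope R_scope.

Record topology (X : Type) := {
  is_open : (X -> Prop) -> Prop;
  open_full : is_open (fun _ => True);
  open_empty : is_open (fun _ => False);
  open_union : forall (I : Type) (F : I -> X -> Prop),
      (forall i, is_open (F i)) -> is_open (fun x => exists i, F i x);
  open_inter : forall U V, is_open U -> is_open V ->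
      is_open (fun x => U x /\ V x);
  open_ext : forall U V, (forall x, U x <-> V x) -> is_open U -> is_open V
}.
Arguments is_open {X} t U.

Definition is_closed {X} (t : topology X) (F : X -> Prop) : Prop :=
  is_open t (fun x => ~ F x).

Definition closure {X} (t : topology X) (S : X -> Prop) : X -> Prop :=
  fun x => forall U, is_open t U -> U x -> exists y, U y /\ S y.

Definition continuous {X} (t : topology X) (f : X -> R) : Prop :=
  forall V : R -> Prop, open_set V -> is_open t (fun x => V (f x)).

Definition T1 {X} (t : topology X) : Prop :=
  forall a : X, is_closed t (fun x => x = a).

Definition completely_regular {X} (t : topology X) : Prop :=
  forall (F : X -> Prop) (x : X), is_closed t F -> ~ F x ->
    exists f : X -> R, continuous t f /\ f x = 0 /\ (forall y, F y -> f y = 1).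

Definition tychonoff {X} (t : topology X) : Prop :=
  T1 t /\ completely_regular t.

(* C(X): continuous real functions, ring operations pointwise.
   An ideal of C(X) is a predicate on functions X -> R contained in C(X). *)
Definition is_ideal {X} (t : topology X) (A : (X -> R) -> Prop) : Prop :=
  (forall f, A f -> continuous t f) /\
  A (fun _ => 0) /\
  (forall f g, A f -> A g -> A (fun x => f x + g x)) /\
  (forall f g, continuous t g -> A f -> A (fun x => g x * f x)).

Definition Ann {X} (t : topology X) (A : (X -> R) -> Prop) : (X -> R) -> Prop :=
  fun f => continuous t f /\ forall g, A g -> forall x, f x * g x = 0.

Definition trivial_meet {X} (A B : (X -> R) -> Prop) : Prop :=
  forall f, A f -> B f -> forall x, f x = 0.

Definition sum_is_whole {X} (t : topology X) (I J : (X -> R) -> Prop) : Prop :=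
  forall h, continuous t h ->
    exists f g, I f /\ J g /\ forall x, h x = f x + g x.

Definition extremally_disconnected {X} (t : topology X) : Prop :=
  forall U, is_open t U -> is_open t (closure t U).

(* Main.v *)
Require Import Defs.
From Stdlib Require Import Reals Lra Classical ClassicalEpsilon FunctionalExtensionality.
Open Scope R_scope.

Lemma open_local {X} (t : topology X) (S : X -> Prop) :
  (forall x, S x -> exists V, is_open t V /\ V x /\ forall y, V y -> S y) ->
  is_open t S.
Proof.
  intros H.
  set (I := {V : X -> Prop | is_open t V /\ forall y, V y -> S y}).
  apply (open_ext _ t (fun x => exists i : I, proj1_sig i x)).
  - intros x; split.
    + intros [[V [H1 HV]] Hx]; simpl in Hx; auto.
    + intros Hx. destruct (H x Hx) as [V [HV1 [HV2 HV3]]].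
      exists (exist _ V (conj HV1 HV3)); exact HV2.
  - apply (open_union _ t). intros i; exact (proj1 (proj2_sig i)).
Qed.

Lemma cont_ext {X} (t : topology X) f g :
  (forall x, f x = g x) -> continuous t f -> continuous t g.
Proof.
  intros E Hf V HV. apply (open_ext _ t (fun x => V (f x))).
  - intros x; rewrite E; tauto.
  - apply Hf; auto.
Qed.

Lemma cont_ball {X} (t : topology X) f (x : X) (d : R) :
  continuous t f -> 0 < d -> is_open t (fun y => Rabs (f y - f x) < d).
Proof.
  intros Hf Hd. apply (Hf (disc (f x) (mkposreal d Hd))). apply disc_P1.
Qed.

Lemma cont_const {X} (t : topology X) c : continuous t (fun _ => c).
Proof.
  intros V _. destruct (classic (V c)).
  - apply (open_ext _ t (fun _ => True)); [intros; tauto | apply (open_full _ t)].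
  - apply (open_ext _ t (fun _ => False)); [intros; tauto | apply (open_empty _ t)].
Qed.

Lemma nbhd_of {V : R -> Prop} : open_set V -> forall r, V r ->
  exists e, 0 < e /\ forall s, Rabs (s - r) < e -> V s.
Proof.
  intros HV r Hr. destruct (HV r Hr) as [[e He] H].
  exists e; split; auto.
Qed.

Lemma cont_plus {X} (t : topology X) f g :
  continuous t f -> continuous t g -> continuous t (fun x => f x + g x).
Proof.
  intros Hf Hg V HV. apply open_local. intros x Hx.
  destruct (nbhd_of HV _ Hx) as [e [He H]].
  exists (fun y => Rabs (f y - f x) < e/2 /\ Rabs (g y - g x) < e/2).
  split; [apply (open_inter _ t); apply cont_ball; auto; lra|].
  split.
  - rewrite !Rminus_diag, Rabs_R0; lra.
  - intros y [H1 H2]. apply H.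
    replace (f y + g y - (f x + g x)) with ((f y - f x) + (g y - g x)) by ring.
    pose proof (Rabs_triang (f y - f x) (g y - g x)); lra.
Qed.

Lemma cont_mult {X} (t : topology X) f g :
  continuous t f -> continuous t g -> continuous t (fun x => f x * g x).
Proof.
  intros Hf Hg V HV. apply open_local. intros x Hx.
  destruct (nbhd_of HV _ Hx) as [e [He H]].
  set (K := 1 + Rabs (f x) + Rabs (g x)).
  assert (HK : 1 <= K) by (unfold K; pose proof (Rabs_pos (f x)); pose proof (Rabs_pos (g x)); lra).
  set (d := Rmin 1 (e / K)).
  assert (Hd : 0 < d) by (unfold d; apply Rmin_pos; [lra| apply Rdiv_lt_0_compat; lra]).
  assert (Hd1 : d <= 1) by apply Rmin_l.
  assert (Hd2 : d * K <= e).
  { assert (d <= e / K) by apply Rmin_r.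
    apply Rmult_le_compat_r with (r := K) in H0; [|lra].
    unfold Rdiv in H0. rewrite Rmult_assoc, Rinv_l, Rmult_1_r in H0; lra. }
  exists (fun y => Rabs (f y - f x) < d /\ Rabs (g y - g x) < d).
  split; [apply (open_inter _ t); apply cont_ball; auto|].
  split.
  - rewrite !Rminus_diag, Rabs_R0; lra.
  - intros y [H1 H2]. apply H.
    replace (f y * g y - f x * g x) with ((f y - f x) * (g y - g x) + (f y - f x) * g x + f x * (g y - g x)) by ring.
    set (a := f y - f x) in *. set (b := g y - g x) in *.
    pose proof (Rabs_triang (a * b + a * g x) (f x * b)).
    pose proof (Rabs_triang (a * b) (a * g x)).
    rewrite !Rabs_mult in *.
    pose proof (Rabs_pos a). pose proof (Rabs_pos b).
    pose proof (Rabs_pos (f x)). pose proof (Rabs_pos (g x)).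
    assert (Rabs a * Rabs b <= d * d) by (apply Rmult_le_compat; lra).
    assert (Rabs a * Rabs (g x) <= d * Rabs (g x)) by (apply Rmult_le_compat_r; lra).
    assert (Rabs (f x) * Rabs b <= Rabs (f x) * d) by (apply Rmult_le_compat_l; lra).
    assert (d * d <= d * 1) by (apply Rmult_le_compat_l; lra).
    assert (Rabs a * Rabs b < d) by nra.
    unfold K in Hd2. nra.
Qed.

Definition indic {X} (C : X -> Prop) : X -> R :=
  fun x => if excluded_middle_informative (C x) then 1 else 0.

Lemma indic_in {X} (C : X -> Prop) x : C x -> indic C x = 1.
Proof. unfold indic; destruct excluded_middle_informative; tauto. Qed.
Lemma indic_out {X} (C : X -> Prop) x : ~ C x -> indic C x = 0.
Proof. unfold indic; destruct excluded_middle_informative; tauto. Qed.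

Lemma cont_ind {X} (t : topology X) C :
  is_open t C -> is_open t (fun x => ~ C x) -> continuous t (indic C).
Proof.
  intros H1 H2 V _.
  destruct (classic (V 1)) as [v1|v1]; destruct (classic (V 0)) as [v0|v0].
  - apply (open_ext _ t (fun _ => True)); [|apply (open_full _ t)].
    intros x; destruct (classic (C x)); [rewrite indic_in|rewrite indic_out]; tauto.
  - apply (open_ext _ t C); [|auto].
    intros x; destruct (classic (C x)); [rewrite indic_in|rewrite indic_out]; tauto.
  - apply (open_ext _ t (fun x => ~ C x)); [|auto].
    intros x; destruct (classic (C x)); [rewrite indic_in|rewrite indic_out]; tauto.
  - apply (open_ext _ t (fun _ => False)); [|apply (open_empty _ t)].
    intros x; destruct (classic (C x)); [rewrite indic_in|rewrite indic_out]; tauto.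
Qed.

Lemma closure_compl_open {X} (t : topology X) U :
  is_open t (fun x => ~ closure t U x).
Proof.
  apply open_local. intros x Hx. unfold closure in Hx.
  apply not_all_ex_not in Hx as [V HV].
  apply imply_to_and in HV as [HV1 HV].
  apply imply_to_and in HV as [HV2 HV].
  exists V; split; [auto|split; [auto|]].
  intros y Hy Hc. destruct (Hc V HV1 Hy) as [z Hz].
  apply HV; exists z; auto.
Qed.

Lemma sub_closure {X} (t : topology X) (U : X -> Prop) x : U x -> closure t U x.
Proof. intros Hx V _ HV; exists x; auto. Qed.

Lemma open_neq0 : open_set (fun r => r <> 0).
Proof.
  intros r Hr. assert (0 < Rabs r) by (apply Rabs_pos_lt; auto).
  exists (mkposreal _ H). intros s Hs. unfold disc in Hs; simpl in Hs.
  intro E; subst s. rewrite Rminus_0_l, Rabs_Ropp in Hs; lra.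
Qed.

Lemma open_gt_half : open_set (fun r => 1/2 < r).
Proof.
  intros r Hr. assert (0 < r - 1/2) by lra.
  exists (mkposreal _ H). intros s Hs. unfold disc in Hs; simpl in Hs.
  pose proof (Rabs_def2 _ _ Hs); lra.
Qed.

Lemma dir21 (X : Type) (t : topology X) : extremally_disconnected t ->
  (forall A B : (X -> R) -> Prop, is_ideal t A -> is_ideal t B ->
     trivial_meet A B -> sum_is_whole t (Ann t A) (Ann t B)).
Proof.
  intros ED A B [HA1 [HA2 [HA3 HA4]]] [HB1 [HB2 [HB3 HB4]]] Hmeet h Hh.
  set (U := fun x => exists a, A a /\ a x <> 0).
  assert (HU : is_open t U).
  { apply open_local. intros x [a [Ha Hax]].
    exists (fun y => a y <> 0). split; [apply (HA1 a Ha (fun r => r <> 0) open_neq0)|].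
    split; auto. intros y Hy; exists a; auto. }
  set (C := closure t U).
  assert (HC : is_open t C) by (apply ED; auto).
  assert (HnC : is_open t (fun x => ~ C x)) by apply closure_compl_open.
  assert (HnnC : is_open t (fun x => ~ ~ C x)).
  { apply (open_ext _ t C); auto. intros; tauto. }
  exists (fun x => h x * indic (fun y => ~ C y) x), (fun x => h x * indic C x).
  split; [|split].
  - split; [apply cont_mult; auto; apply cont_ind; auto|].
    intros a Ha x. destruct (classic (C x)) as [Cx|Cx].
    + rewrite indic_out by tauto; ring.
    + assert (a x = 0). { apply NNPP; intro N; apply Cx. apply sub_closure. exists a; auto. }
      rewrite H; ring.
  - split; [apply cont_mult; auto; apply cont_ind; auto|].
    intros b Hb x. destruct (classic (C x)) as [Cx|Cx].
    + assert (b x = 0).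
      { apply NNPP; intro N.
        destruct (Cx (fun y => b y <> 0) (HB1 b Hb _ open_neq0) N) as [y [Hby [a [Ha Hay]]]].
        assert (A (fun z => b z * a z)) by (apply HA4; auto).
        assert (B (fun z => b z * a z)).
        { replace (fun z => b z * a z) with (fun z => a z * b z)
            by (apply functional_extensionality; intros; ring).
          apply HB4; auto. }
        pose proof (Hmeet _ H H0 y). simpl in H1.
        apply Rmult_integral in H1; tauto. }
      rewrite H; ring.
    + rewrite indic_out by auto; ring.
  - intros x. destruct (classic (C x)) as [Cx|Cx].
    + rewrite (indic_in C x) by auto. rewrite (indic_out (fun y => ~ C y) x) by tauto. ring.
    + rewrite (indic_out C x) by auto. rewrite (indic_in (fun y => ~ C y) x) by auto. ring.
Qed.

Lemma dir12 (X : Type) (t : topology X) : completely_regular t ->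
  (forall A B : (X -> R) -> Prop, is_ideal t A -> is_ideal t B ->
     trivial_meet A B -> sum_is_whole t (Ann t A) (Ann t B)) ->
  extremally_disconnected t.
Proof.
  intros CR H1 U HU.
  set (A := fun f => continuous t f /\ forall x, ~ U x -> f x = 0).
  set (B := fun f => continuous t f /\ forall x, U x -> f x = 0).
  assert (IA : is_ideal t A).
  { split; [|split; [|split]].
    - intros f [Hf _]; auto.
    - split; [apply cont_const | reflexivity].
    - intros f g [Hf Hf'] [Hg Hg']; split; [apply cont_plus; auto|].
      intros x Hx; rewrite Hf', Hg'; auto; ring.
    - intros f g Hg [Hf Hf']; split; [apply cont_mult; auto|].
      intros x Hx; rewrite Hf'; auto; ring. }
  assert (IB : is_ideal t B).
  { split; [|split; [|split]].
    - intros f [Hf _]; auto.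
    - split; [apply cont_const | reflexivity].
    - intros f g [Hf Hf'] [Hg Hg']; split; [apply cont_plus; auto|].
      intros x Hx; rewrite Hf', Hg'; auto; ring.
    - intros f g Hg [Hf Hf']; split; [apply cont_mult; auto|].
      intros x Hx; rewrite Hf'; auto; ring. }
  assert (M : trivial_meet A B).
  { intros f [_ Ha] [_ Hb] x. destruct (classic (U x)); auto. }
  destruct (H1 A B IA IB M (fun _ => 1) (cont_const t 1)) as [f [g [[Hf Hf'] [[Hg Hg'] Hs]]]].
  assert (one_minus : forall phi, continuous t phi -> continuous t (fun x => 1 - phi x)).
  { intros phi Hphi. apply (cont_ext t (fun x => 1 + (-1) * phi x)); [intros; ring|].
    apply cont_plus; [apply cont_const|apply cont_mult; auto; apply cont_const]. }
  assert (fU : forall y, U y -> f y = 0).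
  { intros y Uy.
    assert (Hcl : is_closed t (fun x => ~ U x)).
    { unfold is_closed. apply (open_ext _ t U); auto. intros; tauto. }
    destruct (CR _ y Hcl (fun N => N Uy)) as [phi [Hphi [Hy Hphi1]]].
    assert (A (fun x => 1 - phi x)).
    { split; [apply one_minus; auto|]. intros x Hx; rewrite Hphi1; auto; ring. }
    pose proof (Hf' _ H y). simpl in H0. rewrite Hy in H0. lra. }
  assert (fC : forall y, closure t U y -> f y = 0).
  { intros y Cy. apply NNPP; intro N.
    destruct (Cy (fun z => f z <> 0) (Hf _ open_neq0) N) as [z [Hz Uz]].
    apply Hz, fU; auto. }
  assert (gC : forall y, ~ closure t U y -> g y = 0).
  { intros y Cy.
    assert (Hcl : is_closed t (closure t U)) by apply closure_compl_open.
    destruct (CR _ y Hcl Cy) as [phi [Hphi [Hy Hphi1]]].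
    assert (B (fun x => 1 - phi x)).
    { split; [apply one_minus; auto|]. intros x Hx; rewrite Hphi1; [ring|].
      apply sub_closure; auto. }
    pose proof (Hg' _ H y). simpl in H0. rewrite Hy in H0. lra. }
  apply (open_ext _ t (fun x => 1/2 < g x)).
  - intros x; split.
    + intros Hx. apply NNPP; intro N. rewrite gC in Hx; auto; lra.
    + intros Hx. pose proof (Hs x). rewrite fC in H; auto. lra.
  - apply Hg, open_gt_half.
Qed.

Theorem theorem2p5 (X : Type) (t : topology X) (hX : tychonoff t) :
  (forall A B : (X -> R) -> Prop, is_ideal t A -> is_ideal t B ->
     trivial_meet A B -> sum_is_whole t (Ann t A) (Ann t B))
  <-> extremally_disconnected t.
Proof.
  split.
  - apply dir12. exact (proj2 hX).
  - apply dir21.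
Qed.
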